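(* Let $X$ be a real Hilbert space, let $A,B\colon X\rightrightarrows X$ be set-valued operators, let $C\colon X\to X$ be a single-valued operator, let $\eta,\gamma,\delta>0$, and set $\lambda:=1+\frac{\delta}{\gamma}$. Define the (possibly set-valued) operator $$T_{A,B,C}:=\mathrm{Id}-\eta J_{\gamma A}+\eta J_{\delta B}\big((1-\lambda)\mathrm{Id}+\lambda J_{\gamma A}-\delta C J_{\gamma A}\big),$$ i.e. $T_{A,B,C}x=\{x-\eta a+\eta b:\ a\in J_{\gamma A}x,\ b\in J_{\delta B}((1-\lambda)x+\lambda a-\delta Ca)\}$. Then $\operatorname{Fix}T_{A,B,C}\neq\varnothing$ if and only if $\operatorname{zer}(A+B+C)\neq\varnothing$. Moreover, if $J_{\gamma A}$ is single-valued, then $J_{\gamma A}(\operatorname{Fix}T_{A,B,C})=\operatorname{zer}(A+B+C)$.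
   Context: For a set-valued operator $A\colon X\rightrightarrows X$: the resolvent is $J_A:=(\mathrm{Id}+A)^{-1}$ (inverse in the sense of graphs); $\operatorname{zer}A:=\{x: 0\in Ax\}$; for a (possibly set-valued) operator $T$, $\operatorname{Fix}T:=\{x: x\in Tx\}$. *)

(* Defs.v *)
From HB Require Import structures.
From mathcomp Require Import all_boot all_order all_algebra.
From mathcomp Require Import all_classical all_reals all_analysis.
Set Implicit Arguments. Unset Strict Implicit. Unset Printing Implicit Defensive.
Import Order.TTheory GRing.Theory Num.Theory.
Import numFieldNormedType.Exports.
Local Open Scope classical_set_scope.
Local Open Scope ring_scope.

(* A real Hilbert space: a complete normed space over R whose norm is induced
   by an inner product ip (symmetric, linear in the first argument,
   ip x x = ||x||^2). *)
Definition hilbert_inner (R : realType) (X : completeNormedModType R)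
  (ip : X -> X -> R) : Prop :=
  (forall x y, ip x y = ip y x) /\
  (forall (a : R) x y z, ip (a *: x + y) z = a * ip x z + ip y z) /\
  (forall x, ip x x = `|x| ^+ 2).

Section SetValued.
Context (R : realType) (X : completeNormedModType R).

Definition scale_op (g : R) (A : X -> set X) : X -> set X :=
  fun x => [set g *: u | u in A x].

(* resolvent J_A := (Id + A)^{-1} (inverse of graphs):
   p \in J_A x  <->  x \in (Id + A) p  <->  exists u \in A p, x = p + u *)
Definition resolvent (A : X -> set X) : X -> set X :=
  fun x => [set p | exists2 u, A p u & x = p + u].

Definition sum3_op (A B : X -> set X) (C : X -> X) : X -> set X :=
  fun x => [set y | exists a b, [/\ A x a, B x b & y = a + b + C x]].

Definition zer (A : X -> set X) : set X := [set x | A x 0].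

Definition Fix (T : X -> set X) : set X := [set x | T x x].

Definition op_image (T : X -> set X) (S : set X) : set X :=
  [set y | exists2 x, S x & T x y].

Definition single_valued (T : X -> set X) : Prop :=
  forall x, exists! y, T x y.

Definition T_ABC (A B : X -> set X) (C : X -> X) (eta gamma delta : R)
  : X -> set X :=
  let lambda := 1 + delta / gamma in
  fun x => [set y | exists a b,
    [/\ resolvent (scale_op gamma A) x a,
        resolvent (scale_op delta B)
          ((1 - lambda) *: x + lambda *: a - delta *: C a) b
      & y = x - eta *: a + eta *: b]].

End SetValued.

(* Main.v *)
Require Import Defs.
From HB Require Import structures.
From mathcomp Require Import all_boot all_order all_algebra.
From mathcomp Require Import all_classical all_reals all_analysis.
Import Order.TTheory GRing.Theory Num.Theory.
Import numFieldNormedType.Exports.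
Local Open Scope classical_set_scope.
Local Open Scope ring_scope.

Lemma key {R : realType} {X : completeNormedModType R} {g d : R} (a u v c : X) :
  0 < g -> 0 < d ->
  (1 - (1 + d / g)) *: (a + g *: u) + (1 + d / g) *: a - d *: c = a + d *: v
  <-> u + v + c = 0.
Proof.
move=> hg hd.
have e1 : (1 - (1 + d / g)) * g = - d.
  rewrite opprD addrA subrr add0r mulNr -mulrA mulVf ?mulr1 //; exact: lt0r_neq0.
have E : (1 - (1 + d / g)) *: (a + g *: u) + (1 + d / g) *: a - d *: c
   = a - d *: (u + c).
  rewrite scalerDr scalerA e1 scaleNr (addrAC _ (- (d *: u))) -scalerDl subrK scale1r.
  by rewrite scalerDr opprD addrA.
rewrite E; split.
- move/addrI => h.
  have : d *: (u + v + c) = 0 by rewrite addrAC scalerDr -h subrr.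
  move/eqP; rewrite scaler_eq0 => /orP[/eqP d0|/eqP //].
  by move: hd; rewrite d0 ltxx.
- move=> h; congr (_ + _); rewrite -scalerN; congr (_ *: _).
  by apply/eqP; rewrite eq_sym -addr_eq0 addrC addrAC h.
Qed.

Section S.
Context (R : realType) (X : completeNormedModType R)
  (A B : X -> set X) (C : X -> X) (eta gamma delta : R)
  (heta : 0 < eta) (hgamma : 0 < gamma) (hdelta : 0 < delta).

Lemma L1 x : Fix (T_ABC A B C eta gamma delta) x ->
  exists2 a, resolvent (scale_op gamma A) x a & zer (sum3_op A B C) a.
Proof.
rewrite /Fix /T_ABC /= => -[a [b [hJa hJb hx]]].
have eba : b = a.
  move: hx; rewrite -{1}(addr0 x) -addrA => /addrI /esym.
  rewrite addrC -scalerBr => /eqP; rewrite scaler_eq0 => /orP[/eqP e0|].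
    by move: heta; rewrite e0 ltxx.
  by rewrite subr_eq0 => /eqP.
subst b.
have hJa' := hJa; case: hJa => w [u hu <-] hxa.
case: hJb => w' [v hv <-] hy.
exists a => //.
rewrite /zer /sum3_op /=; exists u, v; split => //.
rewrite hxa in hy.
by apply/esym; apply: (proj1 (key a u v (C a) hgamma hdelta)).
Qed.

Lemma L2 z : zer (sum3_op A B C) z ->
  exists2 x, Fix (T_ABC A B C eta gamma delta) x & resolvent (scale_op gamma A) x z.
Proof.
rewrite /zer /sum3_op /= => -[u [v [hu hv h0]]].
have hJ : resolvent (scale_op gamma A) (z + gamma *: u) z.
  by exists (gamma *: u) => //; exists u.
exists (z + gamma *: u) => //.
rewrite /Fix /T_ABC /=; exists z, z; split => //; last by rewrite subrK.
exists (delta *: v); first by exists v.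
by apply: (proj2 (key z u v (C z) hgamma hdelta)); rewrite h0.
Qed.
End S.

Theorem proposition2p1 (R : realType) (X : completeNormedModType R)
  (ip : X -> X -> R) (hX : hilbert_inner ip)
  (A B : X -> set X) (C : X -> X) (eta gamma delta : R)
  (heta : 0 < eta) (hgamma : 0 < gamma) (hdelta : 0 < delta) :
  (Fix (T_ABC A B C eta gamma delta) !=set0 <-> zer (sum3_op A B C) !=set0) /\
  (single_valued (resolvent (scale_op gamma A)) ->
     op_image (resolvent (scale_op gamma A)) (Fix (T_ABC A B C eta gamma delta))
     = zer (sum3_op A B C)).
Proof.
split.
  split=> -[x hx].
    by have [a _ ha] := @L1 _ _ A B C eta gamma delta heta hgamma hdelta _ hx; exists a.
  by have [y hy _] := @L2 _ _ A B C eta gamma delta hgamma hdelta _ hx; exists y.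
move=> sv; apply/seteqP; split=> y.
  move=> -[x hx hxy]; have [a hxa ha] := @L1 _ _ A B C eta gamma delta heta hgamma hdelta _ hx.
  have [t [_ ht]] := sv x.
  by rewrite -(ht _ hxy) (ht _ hxa).
by move=> hy; have [x hx hxy] := @L2 _ _ A B C eta gamma delta hgamma hdelta _ hy; exists x.
Qed.
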